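(* Let $\Gamma$ be a lattice satisfying the standing assumptions below. Let $\rho=(f_1,\dots,f_m)$, $m\ge 2$, be a face path with volume sequence $\Lambda(\rho)=(\nu_1,\dots,\nu_{m-1})$, and suppose there is a volume $\nu_0\notin\Lambda(\rho)$ with $f_1,f_m\in\partial(\nu_0)$ (i.e. $\rho$ is a simple face cycle). Then $W^Z(\rho)=\prod_{i=1}^m Z_{f_i}$ commutes with every element of the stabilizer group of the 3D toric code on $\Gamma$, i.e. it is a stabilizer or a logical operator.
   Context: $\Gamma$ is a finite, connected three-dimensional cell complex (lattice) with vertices $C_0(\Gamma)$, edges $C_1(\Gamma)$ (partial edges, incident on only one vertex, are allowed at the boundary), faces $C_2(\Gamma)$ and volumes $C_3(\Gamma)$. For a face $f$, $\partial(f)$ is its set of boundary edges; for a volume $\nu$, $\partial(\nu)$ is its set of boundary faces; for an edge $e$, $\iota(e)$ is the set of faces containing $e$ in their boundary. Every face lies in the boundary of at most two volumes. Standing assumptions: (L1) $\Gamma$ has no boundaries in its interior; (L2) the boundary of every face of $\Gamma$ and of its dual $\Gamma^*$ is either a closed path or an open path beginning and ending with partial edges; the dual complex is connected. The 3D toric code on $\Gamma$ has one qubit per face and stabilizer group generated by $B_e=\prod_{f\in\iota(e)}Z_f$ ($e\in C_1(\Gamma)$) and $A_\nu=\prod_{f\in\partial(\nu)}X_f$ ($\nu\in C_3(\Gamma)$). A logical operator is a Pauli operator commuting with all stabilizers but not in the stabilizer group (up to phase). A face path is a sequence of faces $(f_1,\dots,f_m)$ with pairwise distinct volumes $\nu_1,\dots,\nu_{m-1}$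 such that $f_i,f_{i+1}\in\partial(\nu_i)$. *)

(* Defs.v *)
From mathcomp Require Import all_boot.
Set Implicit Arguments. Unset Strict Implicit. Unset Printing Implicit Defensive.

Record lattice := Lattice {
  vert : finType;
  edge : finType;
  face : finType;                 (* C_2 : one qubit per face *)
  vol  : finType;
  ends : edge -> {set vert};      (* endpoints of an edge (1 if partial) *)
  fbd  : face -> {set edge};
  vbd  : vol -> {set face}
}.

Definition iota (G : lattice) (e : edge G) : {set face G} :=
  [set f | e \in fbd f].

Definition lattice_axioms (G : lattice) : Prop :=
  (forall e : edge G, 0 < #|ends e| <= 2) /\
  (forall f : face G, #|[set nu : vol G | f \in vbd nu]| <= 2).

(* Pauli operators on the face qubits, up to phase: (X-support, Z-support). *)
Definition pauli (G : lattice) : Type := ({set face G} * {set face G})%type.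

Definition pmul (G : lattice) (P Q : pauli G) : pauli G :=
  ((P.1 :\: Q.1) :|: (Q.1 :\: P.1), (P.2 :\: Q.2) :|: (Q.2 :\: P.2)).

Definition pid (G : lattice) : pauli G := (set0, set0).

Definition Zop (G : lattice) (A : {set face G}) : pauli G := (set0, A).
Definition Xop (G : lattice) (A : {set face G}) : pauli G := (A, set0).

(* P and Q commute iff the symplectic form vanishes. *)
Definition pcommute (G : lattice) (P Q : pauli G) : bool :=
  ~~ odd (#|P.1 :&: Q.2| + #|P.2 :&: Q.1|).

Definition Bop (G : lattice) (e : edge G) : pauli G := Zop (iota e).
Definition Aop (G : lattice) (nu : vol G) : pauli G := Xop (vbd nu).

Inductive in_stab (G : lattice) : pauli G -> Prop :=
| stab_id : in_stab (pid G)
| stab_B e : in_stab (Bop e)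
| stab_A nu : in_stab (Aop nu)
| stab_mul P Q : in_stab P -> in_stab Q -> in_stab (pmul P Q).

Definition face_path (G : lattice) (fs : seq (face G)) (vs : seq (vol G))
  : Prop :=
  size vs = (size fs).-1 /\ uniq vs /\
  forall i (nu : vol G) (f0 : face G), i < size vs ->
    nth f0 fs i \in vbd (nth nu vs i) /\ nth f0 fs i.+1 \in vbd (nth nu vs i).

Definition WZ (G : lattice) (fs : seq (face G)) : pauli G :=
  foldr (fun f P => pmul (Zop [set f]) P) (pid G) fs.

(* Main.v *)
Require Import Defs.
From mathcomp Require Import all_boot.

Lemma card_ind (T : finType) (A : {set T}) : #|A| = \sum_x (x \in A : nat).
Proof. by rewrite -sum1_card big_mkcond /=; apply: eq_bigr => x _; case: (x \in A). Qed.

Lemma card_symdiff (T : finType) (A X Y : {set T}) :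
  #|A :&: ((X :\: Y) :|: (Y :\: X))| + 2 * #|A :&: X :&: Y| = #|A :&: X| + #|A :&: Y|.
Proof.
rewrite !card_ind big_distrr -!big_split /=; apply: eq_bigr => x _.
by rewrite !inE; case: (x \in A); case: (x \in X); case: (x \in Y).
Qed.

Lemma odd_symdiff (T : finType) (A X Y : {set T}) :
  odd #|A :&: ((X :\: Y) :|: (Y :\: X))| = odd #|A :&: X| (+) odd #|A :&: Y|.
Proof.
have := @card_symdiff _ A X Y => /(congr1 odd); rewrite !oddD => <-.
by rewrite /= addbF addbb addbF.
Qed.

Lemma WZ1 (G : lattice) (fs : seq (face G)) : (WZ fs).1 = set0.
Proof. by elim: fs => [|f s IH] //=; rewrite IH setD0 setU0. Qed.

Lemma WZ2 (G : lattice) (fs : seq (face G)) (B : {set face G}) :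
  odd #|B :&: (WZ fs).2| = odd (count (mem B) fs).
Proof.
elim: fs => [|f s IH] /=; first by rewrite setI0 cards0.
rewrite odd_symdiff IH oddD; congr (_ (+) _).
case: (boolP (f \in B)) => hf /=.
  by rewrite (setIidPr _) ?cards1 // sub1set.
rewrite (_ : _ :&: _ = set0) ?cards0 //; apply/setP => x; rewrite !inE.
by case: eqP => [->|]; rewrite ?andbF // (negbTE hf).
Qed.

Lemma stab_comm (G : lattice) (fs : seq (face G)) :
  (forall nu, ~~ odd (count (mem (vbd nu)) fs)) ->
  forall S : pauli G, in_stab S -> pcommute (WZ fs) S.
Proof.
move=> H S hS; rewrite /pcommute WZ1 set0I cards0 add0n.
elim: hS => [|e|nu|P Q _ IP _ IQ] /=.
- by rewrite setI0 cards0.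
- by rewrite setI0 cards0.
- by rewrite setIC WZ2 H.
- by rewrite /pmul /= odd_symdiff (negbTE IP) (negbTE IQ).
Qed.

Lemma count_nth_sum (T : eqType) (x0 : T) (a : pred T) (s : seq T) :
  count a s = \sum_(i < size s) a (nth x0 s i).
Proof.
rewrite -sum1_count (big_nth x0) big_mkord big_mkcond /=.
by apply: eq_bigr => i _; case: (a _).
Qed.

Theorem lemma2 (G : lattice) (fs : seq (face G)) (vs : seq (vol G))
  (nu0 : vol G) (f0 : face G) :
  lattice_axioms G ->
  2 <= size fs ->
  face_path fs vs ->
  nu0 \notin vs ->
  nth f0 fs 0 \in vbd nu0 ->
  nth f0 fs (size fs).-1 \in vbd nu0 ->
  forall S : pauli G, in_stab S -> pcommute (WZ fs) S.
Proof.
move=> [_ Hax] Hm [Hsz [Hu Hp]] Hn0 Hfirst Hlast.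
apply: stab_comm => nu.
set m := size fs in Hm Hsz Hlast *.
have Hsz' : (size vs).+1 = m by rewrite Hsz prednK // (leq_trans _ Hm).
pose c i := nth nu0 (rcons vs nu0) i.
pose c' i := nth nu0 (nu0 :: vs) i.
have Ha : forall i, i < m -> nth f0 fs i \in vbd (c i).
  move=> i hi; rewrite /c nth_rcons.
  case: ltnP => hi'; first by case: (Hp i nu0 f0 hi').
  have -> : i = size vs by apply/eqP; rewrite eqn_leq hi' -ltnS Hsz' andbT.
  by rewrite eqxx Hsz.
have Hb : forall i, i < m -> nth f0 fs i \in vbd (c' i).
  move=> [|j] hj //=.
  have hj' : j < size vs by rewrite -ltnS Hsz'.
  by case: (Hp j nu0 f0 hj').
have Hc : forall i, i < m -> c i != c' i.
  move=> [|j] hj /=.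
    rewrite /c /c' /=; clear Ha Hb c c'; case: vs Hsz Hsz' Hn0 Hu Hp => [|v vs'] /= _ Hs Hn _ _.
      by rewrite -Hs in Hm.
    by apply: contraNneq Hn => <-; rewrite mem_head.
  rewrite /c /c' /= nth_rcons.
  case: ltnP => hj1.
    by rewrite nth_uniq // ?(ltn_trans _ hj1) // neq_ltn ltnSn orbT.
  have hj2 : j.+1 = size vs by apply/eqP; rewrite eqn_leq hj1 -ltnS Hsz' andbT.
  rewrite hj2 eqxx; apply: contraNneq Hn0 => ->; apply: mem_nth; rewrite -hj2 //.
have Hd : forall i, i < m -> (nth f0 fs i \in vbd nu : nat) = (c i == nu) + (c' i == nu).
  move=> i hi.
  have ha := Ha i hi; have hb := Hb i hi; have hc := Hc i hi.
  case: (boolP (nth f0 fs i \in vbd nu)) => hin.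
    case: (eqVneq (c i) nu) => e1.
      by rewrite -e1 eq_sym (negbTE hc).
    case: (eqVneq (c' i) nu) => e2 //.
    have := Hax (nth f0 fs i).
    have hsub : nu |: [set c i; c' i] \subset [set x : vol G | nth f0 fs i \in vbd x].
      by apply/subsetP => x; rewrite !inE => /or3P [] /eqP ->.
    move/(leq_trans (subset_leq_card hsub)).
    by rewrite cardsU1 cards2 hc !inE negb_or eq_sym e1 eq_sym e2.
  case: (eqVneq (c i) nu) => [e|_]; first by rewrite -e ha in hin.
  by case: (eqVneq (c' i) nu) => [e|_] //; rewrite -e hb in hin.
rewrite (count_nth_sum _ f0) -/m.
rewrite (eq_bigr (fun i : 'I_m => (c i == nu) + (c' i == nu))); last first.
  by move=> i _; rewrite Hd.
rewrite big_split /=.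
have e1 : \sum_(i < m) (c i == nu) = count (pred1 nu) (rcons vs nu0).
  by rewrite (count_nth_sum _ nu0) size_rcons Hsz'.
have e2 : \sum_(i < m) (c' i == nu) = count (pred1 nu) (nu0 :: vs).
  by rewrite (count_nth_sum _ nu0) /= Hsz'.
rewrite e1 e2 -cats1 count_cat /= addn0 addnC.
by rewrite (addnC (count_mem nu vs)) addnn odd_double.
Qed.
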